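(* Let $k$ be an algebraically closed field of characteristic $2$, $t$ transcendental over $k$, and $f(x)=a_2x^2+a_1x+a_0\in k[x]$ with $a_2a_1\neq0$. Then $\operatorname{Gal}(f^n(x)-t/k(t))\cong(C_2)^n$ for all $n\in\mathbb N$, where $C_2$ is the cyclic group of order $2$.
   Context: $f^n$ is $n$-fold composition; $\operatorname{Gal}(f^n(x)-t/k(t))$ is the Galois group of the splitting field of $f^n(x)-t$ over $k(t)$. *)

(* Defs.v *)
From HB Require Import structures.
From mathcomp Require Import all_boot all_order all_algebra all_fingroup all_solvable all_field fraction.
Set Implicit Arguments. Unset Strict Implicit. Unset Printing Implicit Defensive.
Import GRing.Theory.
Local Open Scope ring_scope.

Notation ratfun k := {fraction {poly k}}.

Definition poly_iter (R : nzRingType) (f : {poly R}) (n : nat) : {poly R} :=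
  iter n (fun g => f \Po g) 'X.

Definition kconst (k : fieldType) (c : k) : ratfun k := @FracField.tofrac _ (c%:P).

Definition tvar (k : fieldType) : ratfun k := @FracField.tofrac _ ('X : {poly k}).

Definition iter_minus_t (k : fieldType) (f : {poly k}) (n : nat) : {poly ratfun k} :=
  map_poly (@kconst k) (poly_iter f n) - (tvar k)%:P.

Definition C2pow (n : nat) := [set: 'rV['Z_2]_n].

(* Main.v *)
Require Import Defs.
From HB Require Import structures.
From mathcomp Require Import all_boot all_order all_algebra all_fingroup all_solvable all_field fraction.
From mathcomp Require Import generic_quotient mxabelem ring.
Import GRing.Theory.
Local Open Scope ring_scope.

Lemma frac_repr (R : idomainType) (x : {fraction R}) :
  exists a b : R, b != 0 /\ x * FracField.tofrac b = FracField.tofrac a.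
Proof.
elim/quotW: x => r.
exists (\n_r), (\d_r); split; first exact: denom_ratioP.
unlock FracField.tofrac.
transitivity (\pi_({fraction R}) (FracField.mulf r (Ratio \d_r 1)))%qT.
  by rewrite FracField.pi_mul.
apply/eqmodP. rewrite /= FracField.equivfE /FracField.mulf /=.
rewrite !numden_Ratio ?mulf_neq0 ?oner_neq0 ?denom_ratioP //.
by rewrite !mulr1 mulrC.
Qed.

Lemma poly_clear (R : idomainType) (q : {poly {fraction R}}) :
  exists W : R, W != 0 /\ exists Q : {poly R},
    map_poly (@FracField.tofrac R) Q = FracField.tofrac W *: q.
Proof.
elim/poly_ind: q => [|q c [W [nzW [Q HQ]]]].
  by exists 1; split; [exact: oner_neq0 | exists 0; rewrite rmorph0 scaler0].
have [a [b [nzb Hab]]] := frac_repr _ c.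
exists (W * b); split; first by rewrite mulf_neq0.
exists (Q * b%:P * 'X + (a * W)%:P).
rewrite rmorphD !rmorphM /= map_polyX !map_polyC HQ /= -Hab.
rewrite -!mul_polyC !polyCM; ring.
Qed.

Lemma indep (R : idomainType) (F : {poly R}) (Q : {poly {poly R}}) :
  (1 < size F)%N -> (size Q <= (size F).-1)%N -> Q != 0 ->
  \sum_(i < size Q) (Q`_i \Po F) * 'X^i != 0.
Proof.
move=> sF sQ nzQ.
set D := (size F).-1.
have D1 : (0 < D)%N by rewrite /D -subn1 subn_gt0.
have lcF : lead_coef F != 0 by rewrite lead_coef_eq0 -size_poly_gt0 (ltn_trans _ sF).
have lcomp (q : {poly R}) : q != 0 -> lead_coef (q \Po F) != 0.
  by move=> nzq; rewrite lead_coef_comp // mulf_neq0 ?expf_neq0 // lead_coef_eq0.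
have scomp (q : {poly R}) : q != 0 -> size (q \Po F) = ((size q).-1 * D).+1.
  move=> nzq; rewrite -size_comp_poly prednK // size_poly_gt0 -lead_coef_eq0.
  exact: lcomp.
pose e (i : nat) := ((size (Q`_i)%R).-1 * D + i)%N.
have sQ0 : (0 < size Q)%N by rewrite size_poly_gt0.
have lQ : ((size Q).-1 < size Q)%N by rewrite ltn_predL.
have Pl : Q`_(Ordinal lQ) != 0.
  by rewrite /= -lead_coefE lead_coef_eq0.
have [i0 Hi0 Hmax] : exists2 i0 : 'I_(size Q), Q`_i0 != 0 &
    forall j : 'I_(size Q), Q`_j != 0 -> (e j <= e i0)%N.
  case: (@arg_maxnP _ (Ordinal lQ) (fun i : 'I_(size Q) => Q`_i != 0) (fun i : 'I_(size Q) => e i) Pl) => i Pi Hi.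
  by exists i.
apply/negP => /eqP Z.
have := congr1 (fun p : {poly R} => p`_(e i0)) Z.
rewrite coef_sum coef0 (bigD1 i0) //= big1 ?addr0.
  rewrite coefMXn /e ltnNge leq_addl /= addnK.
  have -> : ((size (Q`_i0)%R).-1 * D)%N = (size (Q`_i0 \Po F)).-1 by rewrite size_comp_poly.
  by rewrite -lead_coefE; apply/eqP; apply: lcomp.
move=> j nji0.
have [->|nzj] := eqVneq (Q`_j) 0; first by rewrite comp_poly0 mul0r coef0.
have ltj : (e j < e i0)%N.
  rewrite ltn_neqAle Hmax // andbT; apply/negP => /eqP ej.
  have : (e j %% D = e i0 %% D)%N by rewrite ej.
  rewrite /e !modnMDl !modn_small ?(leq_trans (ltn_ord _) sQ) // => eji.
  by move/negP: nji0; apply; apply/eqP/ord_inj.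
rewrite coefMXn; case: ltnP => // leji.
apply: nth_default; rewrite scomp // leq_subRL // addnC.
by move: ltj; rewrite /e.
Qed.

Section Main.
Variables (k : closedFieldType) (char2 : 2%N \in [pchar k]) (a2 a1 a0 : k).
Hypothesis ha : a2 * a1 != 0.
Variable (L : splittingFieldType (ratfun k)).

Definition fk : {poly k} := a2 *: 'X^2 + a1 *: 'X + a0%:P.
Definition iota : {rmorphism k -> L} :=
  (GRing.in_alg L \o (@FracField.tofrac _) \o polyC)%FUN.
Arguments iota : simpl never.
Definition FL n := map_poly iota (poly_iter fk n).
Definition TT : L := GRing.in_alg L (tvar k).

Lemma h2k : (2%:R : k) = 0.
Proof. by move: char2; rewrite inE => /andP[_ /eqP]. Qed.

Lemma h2L : (2%:R : L) = 0.
Proof. by rewrite -(rmorph_nat iota) h2k rmorph0. Qed.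

Lemma oppL (x : L) : - x = x.
Proof.
apply/eqP; rewrite eq_sym -subr_eq0 opprK.
have -> : x + x = 2%:R * x by ring.
by rewrite h2L mul0r.
Qed.

Lemma iterS n : poly_iter fk n.+1 = fk \Po poly_iter fk n.
Proof. by []. Qed.

Lemma FLS n : FL n.+1 = map_poly iota fk \Po FL n.
Proof. by rewrite /FL iterS map_comp_poly. Qed.

Lemma hornf (x : L) : (map_poly iota fk).[x] = iota a2 * x ^+ 2 + iota a1 * x + iota a0.
Proof. by rewrite /fk !rmorphD /= !map_polyZ map_polyXn map_polyX map_polyC /= !hornerE. Qed.

Lemma FLadd n (x y : L) : (FL n).[x + y] = (FL n).[x] + (FL n).[y] + (FL n).[0].
Proof.
elim: n x y => [|n IH] x y.
  by rewrite /FL /= map_polyX !hornerX addr0.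
rewrite FLS !horner_comp IH !hornf.
set u := (FL n).[x]; set w := (FL n).[y]; set c := (FL n).[0].
apply/eqP; rewrite -subr_eq0.
set A := iota a2; set B := iota a1; set C := iota a0.
have -> : A * (u + w + c) ^+ 2 + B * (u + w + c) + C -
   (A * u ^+ 2 + B * u + C + (A * w ^+ 2 + B * w + C) + (A * c ^+ 2 + B * c + C))
   = 2%:R * (A * (u * w + u * c + w * c) - C) by ring.
by rewrite h2L mul0r.
Qed.

Lemma size_fk : size fk = 3%N.
Proof.
have a2n : a2 != 0 by move: ha; rewrite mulf_eq0 negb_or => /andP[].
rewrite /fk -addrA size_polyDl size_scale // size_polyXn //.
apply: (leq_ltn_trans (size_polyD _ _)).
rewrite gtn_max (leq_ltn_trans (size_scale_leq _ _)) ?size_polyX //.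
by rewrite (leq_ltn_trans (size_polyC_leq1 _)).
Qed.

Lemma sizeF n : size (poly_iter fk n) = (2 ^ n).+1.
Proof.
elim: n => [|n IH]; first by rewrite /= size_polyX.
have H := size_comp_poly fk (poly_iter fk n).
rewrite -iterS size_fk IH /= -expnS in H.
rewrite -H prednK // lt0n; apply/negP => /eqP H0.
by move: H; rewrite H0 /= => /esym/eqP; rewrite expn_eq0.
Qed.

Lemma derivF n : (poly_iter fk n)^`() = (a1 ^+ n)%:P.
Proof.
elim: n => [|n IH]; first by rewrite /= derivX expr0.
rewrite iterS deriv_comp IH /fk !derivD !derivZ derivXn derivX derivC /=.
rewrite -mulr_natr -polyC_natr h2k polyC0 !mulr0 scaler0 add0r addr0.
by rewrite alg_polyC comp_polyC -polyCM exprS.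
Qed.


Lemma rootsk (Z : {poly k}) (x : L) :
  Z != 0 -> (map_poly iota Z).[x] = 0 -> exists c, x = iota c.
Proof.
move=> nzZ; have [r Hr] := closed_field_poly_normal Z.
rewrite Hr map_polyZ hornerZ => /eqP; rewrite mulf_eq0 fmorph_eq0 lead_coef_eq0 (negbTE nzZ) /=.
rewrite rmorph_prod horner_prod prodf_seq_eq0 => /hasP[z _ /=].
by rewrite map_polyXsubC hornerXsubC subr_eq0 => /eqP ->; exists z.
Qed.

Lemma TT_notk c : TT != iota c.
Proof.
apply/eqP => /fmorph_inj /eqP; rewrite /tvar tofrac_eq => /eqP H.
by have := size_polyX k; rewrite H size_polyC; case: (c != 0).
Qed.

Lemma eval_TT (q : {poly k}) :
  (map_poly iota q).[TT] = GRing.in_alg L (FracField.tofrac q).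
Proof.
elim/poly_ind: q => [|q c IH]; first by rewrite !rmorph0 horner0.
rewrite rmorphD rmorphM /= map_polyX map_polyC /= hornerD hornerM hornerX hornerC IH.
rewrite /TT /tvar tofracD tofracM. rewrite /GRing.in_alg /=. by rewrite mulr_algl scalerDl scalerA.
Qed.


Lemma pE n : map_poly (GRing.in_alg L) (iter_minus_t fk n) = FL n - TT%:P.
Proof.
rewrite /iter_minus_t rmorphB /= map_polyC -map_poly_comp.
by congr (_ - _); apply: eq_map_poly.
Qed.

Lemma tofrac_inj : injective (@FracField.tofrac {poly k}).
Proof. by move=> x y /eqP; rewrite tofrac_eq => /eqP. Qed.

Lemma degree n (x : L) : (FL n).[x] = TT -> adjoin_degree 1%VS x = (2 ^ n)%N.
Proof.
move=> Hx.
have pOver : (FL n - TT%:P) \is a polyOver 1%VS by rewrite -pE; apply/polyOver1P; eexists.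
have sFL : size (FL n) = (2 ^ n).+1 by rewrite /FL size_map_poly sizeF.
have sp : size (FL n - TT%:P) = (2 ^ n).+1.
  rewrite size_polyDl sFL // size_polyN (leq_ltn_trans (size_polyC_leq1 _)) //.
  by rewrite ltnS expn_gt0.
have nzp : FL n - TT%:P != 0 by rewrite -size_poly_gt0 sp.
have rootp : root (FL n - TT%:P) x by rewrite rootE hornerD hornerN hornerC Hx subrr.
apply/eqP; rewrite eqn_leq; apply/andP; split.
  have := dvdp_leq nzp (minPoly_dvdp pOver rootp).
  by rewrite size_minPoly sp ltnS.
rewrite leqNgt; apply/negP => ltd.
case/polyOver1P: (minPolyOver 1%VS x) => m' Hm'.
have [W [nzW [Q HQ]]] := poly_clear _ m'.
have sQ : size Q = size (minPoly 1%VS x).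
  rewrite -(size_map_inj_poly tofrac_inj) ?rmorph0 // HQ size_scale ?tofrac_eq0 //.
  by rewrite Hm' size_map_poly.
have nzQ : Q != 0 by rewrite -size_poly_gt0 sQ size_minPoly.
have := @indep _ (poly_iter fk n) Q _ _ nzQ.
have s1 : (1 < size (poly_iter fk n))%N by rewrite sizeF ltnS expn_gt0.
have s2 : (size Q <= (size (poly_iter fk n)).-1)%N by rewrite sQ size_minPoly sizeF.
move=> /(_ s1 s2).
set Z := \sum_(i < _) _ => nzZ.
have Hx' : (map_poly iota (poly_iter fk n)).[x] = TT := Hx.
have Z0 : (map_poly iota Z).[x] = 0.
  rewrite rmorph_sum horner_sum.
  transitivity (\sum_(i < size Q) GRing.in_alg L (FracField.tofrac W) *
                  ((minPoly 1%VS x)`_i * x ^+ i)).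
    apply: eq_bigr => i _.
    rewrite rmorphM /= map_polyXn map_comp_poly hornerM horner_comp hornerXn Hx' eval_TT.
    have : (map_poly (@FracField.tofrac _) Q)`_i = (FracField.tofrac W *: m')`_i by rewrite HQ.
    rewrite coef_map /= coefZ => ->.
    rewrite Hm' coef_map /= mulrA; congr (_ * _); by rewrite mulr_algl scalerA.
  by rewrite -mulr_sumr sQ -horner_coef (rootP (root_minPoly _ _)) mulr0.
have [c Hc] := @rootsk Z x nzZ Z0.
have := TT_notk ((poly_iter fk n).[c]).
by rewrite -horner_map -Hc Hx' eqxx.
Qed.


Lemma sizep n : size (FL n - TT%:P) = (2 ^ n).+1.
Proof.
have sFL : size (FL n) = (2 ^ n).+1 by rewrite /FL size_map_poly sizeF.
rewrite size_polyDl sFL // size_polyN (leq_ltn_trans (size_polyC_leq1 _)) //.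
by rewrite ltnS expn_gt0.
Qed.

Lemma pOver n : (FL n - TT%:P) \is a polyOver 1%VS.
Proof. by rewrite -pE; apply/polyOver1P; eexists. Qed.

Lemma root_diff n (x r : L) : (FL n).[x] = TT -> (FL n).[r] = TT -> r - x \in 1%VS.
Proof.
move=> Hx Hr.
set G := poly_iter fk n - ((poly_iter fk n).[0])%:P.
have nzG : G != 0.
  rewrite -size_poly_gt0 size_polyDl sizeF // size_polyN (leq_ltn_trans (size_polyC_leq1 _)) //.
  by rewrite ltnS expn_gt0.
have : (map_poly iota G).[r - x] = 0.
  have -> : map_poly iota G = FL n - (iota ((poly_iter fk n).[0]))%:P.
    by rewrite rmorphB; congr (_ - _); exact: map_polyC.
  rewrite hornerD hornerN hornerC -horner_map rmorph0.
  have := FLadd n (r - x) x; rewrite subrK Hr Hx => H.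
  rewrite -[X in _ - X]oppL opprK.
  by apply/(addIr TT); rewrite add0r [RHS]H addrAC.
case/(@rootsk G (r - x) nzG) => c ->.
exact: rpredZ (mem1v _).
Qed.

Lemma rootFL n (x y : L) : (FL n).[x] = TT -> root (minPoly 1%VS x) y -> (FL n).[y] = TT.
Proof.
move=> Hx Hy.
have rootp : root (FL n - TT%:P) x by rewrite rootE hornerD hornerN hornerC Hx subrr.
have := root_dvdp (minPoly_dvdp (pOver n) rootp) Hy.
by rewrite rootE hornerD hornerN hornerC subr_eq0 => /eqP.
Qed.

Lemma gal_sq n (x : L) s : (FL n).[x] = TT -> (s \in 'Gal(<<1; x>> / 1%VS))%g -> (s ^+ 2)%g = 1%g.
Proof.
move=> Hx Hs.
have Hsx : (FL n).[s x] = TT.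
  by apply: (@rootFL n x _ Hx); apply: root_minPoly_gal => //; [exact: subv_adjoin | exact: memv_adjoin].
have Hv := @root_diff n x (s x) Hx Hsx.
apply/eqP; rewrite gal_adjoin_eq ?groupX ?group1 //.
rewrite expgS expg1 galM ?memv_adjoin // gal_id.
set v := s x - x.
have e : s x = x + v by rewrite /v addrC subrK.
rewrite {1}e linearD /= (fixed_gal (subv_adjoin _ _) Hs Hv) e -addrA.
by rewrite [x + v]addrC addrK -{1}(oppL v) addNr addr0.
Qed.


Lemma main_sec (E : {subfield L}) (n : nat) :
  splittingFieldFor 1%VS
    (map_poly (GRing.in_alg L) (iter_minus_t fk n)) E ->
  ('Gal(E / 1%VS))%G \isog C2pow n.
Proof.
rewrite pE => -[rs Hp HE].
have rootrs r : r \in rs -> (FL n).[r] = TT.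
  move=> rr; have := eqp_root Hp r; rewrite root_prod_XsubC rr => /rootP.
  by rewrite hornerD hornerN hornerC => /eqP; rewrite subr_eq0 => /eqP.
have nrs : rs != [::].
  apply/negP => /eqP rs0; move: (eqp_size Hp); rewrite rs0 big_nil size_poly1 sizep.
  by move/eqP; rewrite eqSS expn_eq0.
set x := head 0 rs.
have xrs : x \in rs by rewrite /x; case: rs nrs {rootrs Hp HE x} => //= ? ? _; rewrite mem_head.
have Hx := rootrs x xrs.
have HEx : E = <<1; x>>%AS.
  apply: val_inj; rewrite /= -HE; apply/eqP; rewrite eqEsubv; apply/andP; split.
    apply/Fadjoin_seqP; split; first exact: subv_adjoin.
    move=> r rr; have Hv := @root_diff n x r Hx (rootrs r rr).
    rewrite -[r](subrK x) rpredD //; first exact: (subvP (subv_adjoin _ _)).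
    exact: memv_adjoin.
  apply/FadjoinP; split; first exact: subv_adjoin_seq.
  exact: seqv_sub_adjoin.
rewrite HEx.
have gal : galois 1%VS <<1; x>>%AS.
  apply/splitting_galoisField; exists (FL n - TT%:P); split.
  - exact: pOver.
  - rewrite unlock derivB derivC subr0 /FL deriv_map derivF map_polyC /=.
    have cop (P : {poly L}) (c : L) : c != 0 -> coprimep P c%:P.
      by move=> nzc; rewrite -alg_polyC coprimepZr // coprimep1.
    apply: cop.
    have a1n : a1 != 0 by move: ha; rewrite mulf_eq0 negb_or => /andP[].
    have : iota (a1 ^+ n) != 0 by rewrite fmorph_eq0 expf_neq0.
    by [].
  - by exists rs => //; rewrite HE HEx.
have card : #|('Gal(<<1; x>>%AS / 1%VS))%g| = (2 ^ n)%N.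
  by rewrite -galois_dim // -adjoin_degreeE (@degree n x Hx).
have ab : (2.-abelem 'Gal(<<1; x>>%AS / 1%VS))%g.
  apply: exponent2_abelem; apply/exponentP => s Hs; exact: (@gal_sq n x s Hx Hs).
rewrite (isog_abelem_card _ ab) card; apply/andP; split.
  exact: (@mx_Fp_abelem 2 1 n).
by rewrite cardsT card_mx card_ord mul1n.
Qed.
End Main.

Theorem theorem5p5 (k : closedFieldType) (char2 : 2%N \in [pchar k])
  (a2 a1 a0 : k) (ha : a2 * a1 != 0)
  (L : splittingFieldType (ratfun k)) (E : {subfield L}) (n : nat) :
  splittingFieldFor 1%VS
    (map_poly (GRing.in_alg L) (iter_minus_t (a2 *: 'X^2 + a1 *: 'X + a0%:P) n)) E ->
  ('Gal(E / 1%VS))%G \isog C2pow n.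
Proof. exact: main_sec. Qed.
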